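(* Let $B\in\mathbb{C}^{n\times n}$ be a Hermitian positive definite matrix with eigenvalues $\sigma_1\ge\sigma_2\ge\dots\ge\sigma_n>0$ and corresponding orthonormal eigenvectors $v_1,\dots,v_n$. Let $1\le k<l<n$, and set $V_k=[v_1,\dots,v_k]$, $V_{l\backslash k}=[v_{k+1},\dots,v_l]$, $V_l^{\perp}=[v_{l+1},\dots,v_n]$. Let $X\in\mathbb{C}^{n\times k}$ satisfy $X^*X=I_k$, and write \[ X=[V_k,V_{l\backslash k},V_l^{\perp}]\begin{bmatrix}X_k\\ X_{l\backslash k}\\ X_l^{\perp}\end{bmatrix},\qquad X_k\in\mathbb{C}^{k\times k},\ X_{l\backslash k}\in\mathbb{C}^{(l-k)\times k},\ X_l^{\perp}\in\mathbb{C}^{(n-l)\times k}, \] where $X_k$ is assumed nonsingular. Then, provided $\tan\angle(V_k,X)\neq 0$, \[ \frac{\tan\angle(V_k,BX)}{\tan\angle(V_k,X)}\le\frac{\sigma_{l+1}}{\sigma_k}+\frac{\sigma_{k+1}-\sigma_{l+1}}{\sigma_k}\cdot\frac{\bigl\lVert X_{l\backslash k}X_k^{-1}\bigr\rVert_2}{\left\lVert\begin{bmatrix}X_{l\backslash k}\\ X_l^{\perp}\end{bmatrix}X_k^{-1}\right\rVert_2}. \]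
   Context: For $n\times k$ matrices $V_k$ (with orthonormal columns) and $Z$ of full column rank, $\angle(V_k,Z)$ denotes the largest principal angle between $\operatorname{span}\{V_k\}$ and $\operatorname{span}\{Z\}$. In the setting of the claim, writing $Z$ in the eigenbasis as $Z=[V_k,V_{l\backslash k},V_l^{\perp}][Z_k;Z_{l\backslash k};Z_l^{\perp}]$ with $Z_k$ nonsingular, one has $\tan\angle(V_k,Z)=\bigl\lVert [Z_{l\backslash k};Z_l^{\perp}]Z_k^{-1}\bigr\rVert_2$. $\lVert\cdot\rVert_2$ is the spectral norm. *)

(* Defs.v *)
From HB Require Import structures.
From mathcomp Require Import all_boot all_order all_algebra.
From mathcomp Require Import classical_sets reals trigo.
From mathcomp.real_closed Require Import complex.
Set Implicit Arguments. Unset Strict Implicit. Unset Printing Implicit Defensive.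
Import Order.TTheory GRing.Theory Num.Theory.
Local Open Scope ring_scope.
Local Open Scope classical_set_scope.

Section Defs.
Variable R : realType.

Definition adjmx m n (A : 'M[R[i]]_(m, n)) : 'M[R[i]]_(n, m) :=
  (map_mx (@conjc R) A)^T.

Definition vnorm n (x : 'cV[R[i]]_n) : R :=
  Num.sqrt (\sum_(i < n) (complex.Re (x i 0) ^+ 2 + complex.Im (x i 0) ^+ 2)).

Definition specnorm m n (A : 'M[R[i]]_(m, n)) : R :=
  sup [set r | exists x : 'cV[R[i]]_n, vnorm x <= 1 /\ r = vnorm (A *m x)].

(* cosine of the largest principal angle between span V (V with orthonormal
   columns) and span Z (same number of columns):
   min over nonzero u in span Z of ||V^* u|| / ||u|| *)
Definition cos_max_angle n k (V Z : 'M[R[i]]_(n, k)) : R :=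
  inf [set r | exists y : 'cV[R[i]]_k,
          Z *m y != 0 /\ r = vnorm (adjmx V *m (Z *m y)) / vnorm (Z *m y)].

Definition max_angle n k (V Z : 'M[R[i]]_(n, k)) : R := acos (cos_max_angle V Z).

Definition tan_angle n k (V Z : 'M[R[i]]_(n, k)) : R := tan (max_angle V Z).

End Defs.

(* Main.v *)
Require Import Defs.
From HB Require Import structures.
From mathcomp Require Import all_boot all_order all_algebra.
From mathcomp Require Import classical_sets reals trigo.
From mathcomp.real_closed Require Import complex.
From mathcomp Require Import ring lra.
Set Implicit Arguments. Unset Strict Implicit. Unset Printing Implicit Defensive.
Import Order.TTheory GRing.Theory Num.Theory.
Local Open Scope ring_scope.

Section H.
Variable R : realType.
Local Notation C := (R[i]).

Definition nsq n (x : 'cV[C]_n) : R :=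
  \sum_(i < n) (complex.Re (x i 0) ^+ 2 + complex.Im (x i 0) ^+ 2).

Lemma nsq_ge0 n (x : 'cV[C]_n) : 0 <= nsq x.
Proof. by apply: sumr_ge0 => i _; rewrite addr_ge0 // sqr_ge0. Qed.

Lemma vnormE n (x : 'cV[C]_n) : vnorm x = Num.sqrt (nsq x).
Proof. by []. Qed.

Lemma vnorm_ge0 n (x : 'cV[C]_n) : 0 <= vnorm x.
Proof. exact: sqrtr_ge0. Qed.

Lemma vnorm_sqr n (x : 'cV[C]_n) : vnorm x ^+ 2 = nsq x.
Proof. by rewrite vnormE sqr_sqrtr // nsq_ge0. Qed.

Lemma Re_sum I (r : seq I) (P : pred I) (F : I -> C) :
  complex.Re (\sum_(i <- r | P i) F i) = \sum_(i <- r | P i) complex.Re (F i).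
Proof. by apply: (big_morph (@complex.Re R)) => // -[a b] [c d]. Qed.

Lemma Im_sum I (r : seq I) (P : pred I) (F : I -> C) :
  complex.Im (\sum_(i <- r | P i) F i) = \sum_(i <- r | P i) complex.Im (F i).
Proof. by apply: (big_morph (@complex.Im R)) => // -[a b] [c d]. Qed.

Lemma adjmx_mul m n p (A : 'M[C]_(m, n)) (B : 'M[C]_(n, p)) :
  adjmx (A *m B) = adjmx B *m adjmx A.
Proof. by rewrite /adjmx map_mxM trmx_mul. Qed.

Lemma nsq_adj n (x : 'cV[C]_n) : (adjmx x *m x) 0 0 = (nsq x)%:C%C.
Proof.
rewrite !mxE /nsq.
rewrite (big_morph (real_complex R) (fun a b => (raddfD _ a b)) (raddf0 _)).
apply: eq_bigr => i _; rewrite !mxE.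
case: (x i 0) => a b /=.
apply/eqP; rewrite eq_complex /=; apply/andP; split; apply/eqP; ring.
Qed.

Lemma nsq_unitary n (V : 'M[C]_n) (x : 'cV[C]_n) :
  adjmx V *m V = 1%:M -> nsq (V *m x) = nsq x.
Proof.
move=> HV.
have := nsq_adj (V *m x); rewrite adjmx_mul -mulmxA (mulmxA (adjmx V)) HV mul1mx.
by rewrite nsq_adj => -[].
Qed.

Lemma nsq_col_mx m n (a : 'cV[C]_m) (b : 'cV[C]_n) :
  nsq (col_mx a b) = nsq a + nsq b.
Proof.
rewrite /nsq big_split_ord /=.
by congr (_ + _); apply: eq_bigr => i _; rewrite ?col_mxEu ?col_mxEd.
Qed.

Lemma nsq_eq0 n (x : 'cV[C]_n) : (nsq x == 0) = (x == 0).
Proof.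
apply/idP/idP => [/eqP|/eqP->]; last first.
  by apply/eqP; apply: big1 => i _; rewrite mxE /= expr0n /= addr0.
move=> Hs; apply/eqP/matrixP => i j; rewrite (ord1 j) mxE.
have H := @psumr_eq0P _ _ _ _ (fun i _ => addr_ge0 (sqr_ge0 _) (sqr_ge0 _)) Hs i isT.
move: H; case: (x i 0) => a b /= /eqP; rewrite paddr_eq0 ?sqr_ge0 // !sqrf_eq0.
by case/andP => /eqP -> /eqP ->.
Qed.

Lemma term_scale (a : R) (z : C) :
  complex.Re ((a%:C)%C * z) ^+ 2 + complex.Im ((a%:C)%C * z) ^+ 2 =
  a ^+ 2 * (complex.Re z ^+ 2 + complex.Im z ^+ 2).
Proof. case: z => u v /=; ring. Qed.

Lemma nsq_scale_le n (d : 'I_n -> R) (c : R) (x y : 'cV[C]_n) :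
  (forall i, y i 0 = ((d i)%:C)%C * x i 0) -> (forall i, d i ^+ 2 <= c) ->
  nsq y <= c * nsq x.
Proof.
move=> Hy Hd; rewrite /nsq mulr_sumr; apply: ler_sum => i _.
by rewrite Hy term_scale ler_wpM2r ?addr_ge0 ?sqr_ge0 ?Hd.
Qed.

Lemma nsq_scale_ge n (d : 'I_n -> R) (c : R) (x y : 'cV[C]_n) :
  (forall i, y i 0 = ((d i)%:C)%C * x i 0) -> (forall i, c <= d i ^+ 2) ->
  c * nsq x <= nsq y.
Proof.
move=> Hy Hd; rewrite /nsq mulr_sumr; apply: ler_sum => i _.
by rewrite Hy term_scale ler_wpM2r ?addr_ge0 ?sqr_ge0 ?Hd.
Qed.

Lemma nsq_scale n (a : R) (x : 'cV[C]_n) : nsq ((a%:C)%C *: x) = a ^+ 2 * nsq x.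
Proof.
rewrite /nsq mulr_sumr; apply: eq_bigr => i _; by rewrite mxE term_scale.
Qed.

Lemma vnorm_scale n (a : R) (x : 'cV[C]_n) : 0 <= a ->
  vnorm ((a%:C)%C *: x) = a * vnorm x.
Proof.
move=> a0; rewrite !vnormE nsq_scale sqrtrM ?sqr_ge0 // sqrtr_sqr ger0_norm //.
Qed.


Lemma nsq_term n (x : 'cV[C]_n) j :
  complex.Re (x j 0) ^+ 2 + complex.Im (x j 0) ^+ 2 <= nsq x.
Proof.
rewrite /nsq (bigD1 j) //= lerDl; apply: sumr_ge0 => i _.
by rewrite addr_ge0 // sqr_ge0.
Qed.

Definition spec_set m n (A : 'M[C]_(m, n)) :=
  [set r : R | exists x : 'cV[C]_n, vnorm x <= 1 /\ r = vnorm (A *m x)]%classic.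

Lemma crude_bound m n (A : 'M[C]_(m, n)) :
  exists M, forall x : 'cV[C]_n, vnorm x <= 1 -> vnorm (A *m x) <= M.
Proof.
pose K i := \sum_j (`|complex.Re (A i j)| + `|complex.Im (A i j)|).
exists (Num.sqrt (\sum_i 2 * K i ^+ 2)) => x Hx.
rewrite vnormE ler_sqrt; last first.
  by apply: sumr_ge0 => i _; rewrite mulr_ge0 // sqr_ge0.
have Hx1 : nsq x <= 1.
  by rewrite -vnorm_sqr -(expr1n _ 2%N) ler_pXn2r // ?nnegrE ?vnorm_ge0.
have Hb : forall j, `|complex.Re (x j 0)| <= 1 /\ `|complex.Im (x j 0)| <= 1.
  move=> j; have := le_trans (nsq_term x j) Hx1.
  move: (sqr_ge0 (complex.Re (x j 0))) (sqr_ge0 (complex.Im (x j 0))).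
  set a := complex.Re _; set b := complex.Im _ => ha hb h.
  split; rewrite ler_norml; apply/andP; split; nra.
have HK : forall i, `|complex.Re ((A *m x) i 0)| <= K i /\
                    `|complex.Im ((A *m x) i 0)| <= K i.
  move=> i; rewrite mxE Re_sum Im_sum; split.
    apply: le_trans (ler_norm_sum _ _ _) _; apply: ler_sum => j _.
    have [h1 h2] := Hb j.
    case: (A i j) h1 h2 => a b; case: (x j 0) => c d /= h1 h2.
    apply: le_trans (ler_normB _ _) _; rewrite !normrM lerD //.
      by rewrite ler_piMr.
    by rewrite ler_piMr.
  apply: le_trans (ler_norm_sum _ _ _) _; apply: ler_sum => j _.
  have [h1 h2] := Hb j.
  case: (A i j) h1 h2 => a b; case: (x j 0) => c d /= h1 h2.
  apply: le_trans (ler_normD _ _) _; rewrite !normrM lerD //.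
    by rewrite ler_piMr.
  by rewrite ler_piMr.
rewrite /nsq; apply: ler_sum => i _.
have [h1 h2] := HK i.
move: h1 h2; set a := complex.Re _; set b := complex.Im _ => h1 h2.
have e1 : a ^+ 2 <= K i ^+ 2.
  by rewrite -real_normK ?num_real // ler_pXn2r ?nnegrE // (le_trans _ h1).
have e2 : b ^+ 2 <= K i ^+ 2.
  by rewrite -real_normK ?num_real // ler_pXn2r ?nnegrE // (le_trans _ h2).
lra.
Qed.


Lemma spec_set0 m n (A : 'M[C]_(m, n)) : spec_set A 0.
Proof.
exists 0; rewrite mulmx0 !vnormE; have -> : nsq (0 : 'cV[C]_n) = 0 by apply/eqP; rewrite nsq_eq0.
have -> : nsq (0 : 'cV[C]_m) = 0 by apply/eqP; rewrite nsq_eq0.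
by rewrite sqrtr0 ler01.
Qed.

Lemma spec_ub m n (A : 'M[C]_(m, n)) : has_ubound (spec_set A).
Proof.
have [M HM] := crude_bound A; exists M => r [x [Hx ->]]; exact: HM.
Qed.

Lemma specnormE m n (A : 'M[C]_(m, n)) : specnorm A = sup (spec_set A).
Proof. by []. Qed.

Lemma specnorm_ge0 m n (A : 'M[C]_(m, n)) : 0 <= specnorm A.
Proof. by rewrite specnormE; apply: ub_le_sup; [exact: spec_ub | exact: spec_set0]. Qed.

Lemma vnorm_eq0 n (x : 'cV[C]_n) : (vnorm x == 0) = (x == 0).
Proof. by rewrite vnormE sqrtr_eq0 -nsq_eq0 eq_le nsq_ge0 andbT. Qed.

Lemma vnorm0 n : vnorm (0 : 'cV[C]_n) = 0.
Proof. by apply/eqP; rewrite vnorm_eq0. Qed.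

Lemma specnorm_bound m n (A : 'M[C]_(m, n)) (x : 'cV[C]_n) :
  vnorm (A *m x) <= specnorm A * vnorm x.
Proof.
have [->|x0] := eqVneq x 0.
  rewrite mulmx0; have /eqP -> : vnorm (0 : 'cV[C]_m) == 0 by rewrite vnorm_eq0.
  by rewrite mulr_ge0 ?specnorm_ge0 ?vnorm_ge0.
have t0 : 0 < vnorm x by rewrite lt_def vnorm_eq0 x0 vnorm_ge0.
pose x' := (((vnorm x)^-1)%:C)%C *: x.
have Hx' : vnorm x' = 1 by rewrite vnorm_scale ?invr_ge0 ?ltW // mulVf // gt_eqF.
have : vnorm (A *m x') <= specnorm A.
  rewrite specnormE; apply: ub_le_sup; first exact: spec_ub.
  by exists x'; rewrite Hx'.
have ti : 0 <= (vnorm x)^-1 by rewrite invr_ge0 ltW.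
rewrite /x' -scalemxAr vnorm_scale // => h.
by rewrite -ler_pdivrMr // mulrC.
Qed.

Lemma specnorm_le m n (A : 'M[C]_(m, n)) (c : R) : 0 <= c ->
  (forall x, vnorm (A *m x) <= c * vnorm x) -> specnorm A <= c.
Proof.
move=> c0 H; rewrite specnormE; apply: ge_sup; first by exists 0; exact: spec_set0.
move=> r [x [Hx ->]]; apply: le_trans (H x) _.
by rewrite ler_piMr.
Qed.


Lemma le_divs (x y u v : R) : 0 < u -> 0 < v -> (x / u <= y / v) = (x * v <= y * u).
Proof. by move=> u0 v0; rewrite ler_pdivrMr // mulrAC ler_pdivlMr. Qed.

Lemma adj_Vk k m p (V : 'M[C]_(k + m + p)) :
  adjmx (lsubmx (lsubmx V)) = usubmx (usubmx (adjmx V)).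
Proof. by apply/matrixP => i j; rewrite !mxE. Qed.

Lemma proj_Vk k m p (V : 'M[C]_(k + m + p)) (w : 'cV[C]_(k + m + p)) :
  adjmx V *m V = 1%:M ->
  adjmx (lsubmx (lsubmx V)) *m (V *m w) = usubmx (usubmx w).
Proof.
by move=> HV; rewrite adj_Vk mulmxA !mul_usub_mx HV mul1mx.
Qed.

Section Angle.
Variables (k m p : nat) (V : 'M[C]_(k + m + p)) (C1 : 'M[C]_k)
  (C2 : 'M[C]_(m, k)) (C3 : 'M[C]_(p, k)).
Hypotheses (k0 : (0 < k)%N) (HV : adjmx V *m V = 1%:M) (HC1 : C1 \in unitmx).
Let Vk := lsubmx (lsubmx V).
Let Cm := col_mx (col_mx C1 C2) C3.
Let Z := V *m Cm.
Let Ay := col_mx C2 C3 *m invmx C1.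

Lemma ratio_num y : vnorm (adjmx Vk *m (Z *m y)) = vnorm (C1 *m y).
Proof. by rewrite /Z -mulmxA proj_Vk // /Cm !mul_col_mx !col_mxKu. Qed.

Lemma ratio_den y : nsq (Z *m y) = nsq (C1 *m y) + nsq (Ay *m (C1 *m y)).
Proof.
rewrite /Z -mulmxA nsq_unitary // /Cm !mul_col_mx !nsq_col_mx /Ay.
by rewrite -mulmxA mulKmx // mul_col_mx nsq_col_mx addrA.
Qed.


Lemma inv_le_swap (u v : R) : 0 < u -> 0 < v -> u^-1 <= v -> v^-1 <= u.
Proof.
move=> u0 v0; rewrite -div1r ler_pdivrMr // => h.
by rewrite -div1r ler_pdivrMr // mulrC.
Qed.

Lemma tan_formula : tan_angle Vk Z = specnorm Ay.
Proof.
rewrite /tan_angle /max_angle /cos_max_angle.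
set S := (X in inf X).
set c := inf S.
set s := specnorm Ay.
have s0 : 0 <= s := specnorm_ge0 Ay.
have Hb : forall v, nsq (Ay *m v) <= s^+2 * nsq v.
  move=> v; rewrite -!vnorm_sqr -exprMn ler_pXn2r ?nnegrE ?mulr_ge0 ?vnorm_ge0 //.
  exact: specnorm_bound.
have s1 : 0 < 1 + s ^+ 2 by rewrite ltr_pwDl // sqr_ge0.
have Smem : forall r, S r -> [/\ 0 <= r, r <= 1 & (1 + s^+2)^-1 <= r^+2].
  move=> r [y [Zy ->]].
  rewrite ratio_num !vnormE.
  have Hd := ratio_den y.
  have hb := Hb (C1 *m y).
  move: Hd hb; set a := nsq (C1 *m y); set b := nsq (Ay *m (C1 *m y)) => Hd hb.
  have a0 : 0 <= a := nsq_ge0 _.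
  have b0 : 0 <= b := nsq_ge0 _.
  have ab : 0 < a + b by rewrite -Hd lt_def nsq_eq0 Zy nsq_ge0.
  rewrite Hd.
  have ap : 0 < a.
    rewrite lt_def a0 andbT; apply/eqP => a_0; move: ab hb; rewrite a_0 mulr0 add0r.
    by move=> ab hb; have := lt_le_trans ab hb; rewrite ltxx.
  split.
  - by rewrite divr_ge0 ?sqrtr_ge0.
  - by rewrite ler_pdivrMr ?sqrtr_gt0 // mul1r ler_sqrt ?lerDl // ltW.
  - rewrite expr_div_n !sqr_sqrtr ?(ltW ab) // -[(1+s^+2)^-1]mul1r le_divs //.
    nra.
have [r0 Sr0] : exists r, S r.
  pose e : 'cV[C]_k := const_mx 1.
  pose y0 := invmx C1 *m e.
  have Ce : C1 *m y0 = e by rewrite /y0 mulKVmx.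
  have e0 : e != 0.
    apply/eqP => /matrixP /(_ (Ordinal k0) 0); rewrite !mxE => /eqP.
    by rewrite oner_eq0.
  exists (vnorm (adjmx Vk *m (Z *m y0)) / vnorm (Z *m y0)); exists y0; split => //.
  rewrite -nsq_eq0 ratio_den Ce; apply/negP => /eqP h.
  have : nsq e <= 0 by rewrite -h lerDl nsq_ge0.
  by rewrite le_eqVlt nsq_eq0 (negbTE e0) /= ltNge nsq_ge0.
have Slb : has_lbound S by exists 0 => r /Smem [].
have cr0 : c <= r0 by exact: ge_inf Slb _ Sr0.
have c1 : c <= 1 by apply: le_trans cr0 _; case: (Smem _ Sr0).
pose q := Num.sqrt ((1 + s^+2)^-1).
have q0 : 0 < q by rewrite sqrtr_gt0 invr_gt0.
have qc : q <= c.
  apply: lb_le_inf; first by exists r0.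
  move=> r /Smem [r0' _ hr]; rewrite -(ger0_norm r0') -sqrtr_sqr ler_sqrt ?sqr_ge0 //.
have c0 : 0 < c := lt_le_trans q0 qc.
have c2 : q^+2 <= c^+2 by rewrite ler_pXn2r ?nnegrE ?(ltW q0) ?(ltW c0).
rewrite sqr_sqrtr ?invr_ge0 ?(ltW s1) // in c2.
have ci : (c^+2)^-1 <= 1 + s^+2 by apply: inv_le_swap; rewrite ?exprn_gt0.
pose g := Num.sqrt ((c^+2)^-1 - 1).
have c21 : c^+2 <= 1 by rewrite -(expr1n _ 2%N) ler_pXn2r ?nnegrE ?(ltW c0).
have ci1 : 1 <= (c^+2)^-1.
  by rewrite -div1r ler_pdivlMr ?exprn_gt0 // mul1r.
have g0 : 0 <= g := sqrtr_ge0 _.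
have gs : g <= s.
  rewrite -(ger0_norm s0) -sqrtr_sqr ler_sqrt ?sqr_ge0 //; lra.
have sg : s <= g.
  apply: specnorm_le => // x.
  have [->|x0] := eqVneq x 0.
    by rewrite mulmx0 !vnorm0 mulr0.
  pose y := invmx C1 *m x.
  have Cy : C1 *m y = x by rewrite /y mulKVmx.
  have nx0 : 0 < nsq x by rewrite lt_def nsq_eq0 x0 nsq_ge0.
  have Sy : S (vnorm (adjmx Vk *m (Z *m y)) / vnorm (Z *m y)).
    exists y; split => //; rewrite -nsq_eq0 ratio_den Cy gt_eqF //.
    by rewrite ltr_pwDl // nsq_ge0.
  have hc : c <= vnorm (adjmx Vk *m (Z *m y)) / vnorm (Z *m y) by exact: ge_inf Slb _ Sy.
  rewrite ratio_num !vnormE ratio_den Cy in hc.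
  have na0 : 0 <= nsq (Ay *m x) := nsq_ge0 _.
  rewrite !vnormE -sqrtrM ?subr_ge0 // ler_sqrt ?mulr_ge0 ?subr_ge0 ?(ltW nx0) //.
  move: hc nx0 na0; move: (nsq x) (nsq (Ay *m x)) => nx na hc nx0 na0.
  have hc2 : c^+2 <= nx / (nx + na).
    rewrite -[nx + na](sqr_sqrtr (addr_ge0 (ltW nx0) na0)) -{1}(sqr_sqrtr (ltW nx0)) -expr_div_n.
    by rewrite ler_pXn2r ?nnegrE ?(ltW c0) // divr_ge0 ?sqrtr_ge0.
  rewrite ler_pdivlMr ?ltr_pwDl // in hc2.
  have h2 := ler_wpM2l (ltW (lt_le_trans ltr01 ci1)) hc2.
  rewrite mulrA mulVf ?expf_neq0 ?gt_eqF // mul1r in h2.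
  nra.
have sgE : s = g by apply/le_anti; rewrite sg gs.
rewrite /tan acosK; last by rewrite in_itv /=; apply/andP; split; lra.
rewrite sin_acos; last by apply/andP; split; lra.
rewrite sgE /g.
have -> : (c^+2)^-1 - 1 = (1 - c^+2) * (c^-1)^+2.
  by field; rewrite gt_eqF.
rewrite sqrtrM ?subr_ge0 // sqrtr_sqr ger0_norm ?invr_ge0 ?ltW //.
Qed.
End Angle.


Lemma specnorm_bound_sq m n (A : 'M[C]_(m, n)) (x : 'cV[C]_n) :
  nsq (A *m x) <= specnorm A ^+ 2 * nsq x.
Proof.
rewrite -!vnorm_sqr -exprMn ler_pXn2r ?nnegrE ?mulr_ge0 ?vnorm_ge0 ?specnorm_ge0 //.
exact: specnorm_bound.
Qed.

Lemma specnorm_le_sq m n (A : 'M[C]_(m, n)) (c : R) : 0 <= c ->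
  (forall x, nsq (A *m x) <= c ^+ 2 * nsq x) -> specnorm A <= c.
Proof.
move=> c0 H; apply: specnorm_le => // x.
rewrite !vnormE -(ger0_norm c0) -sqrtr_sqr -sqrtrM ?sqr_ge0 // ler_sqrt //.
by rewrite mulr_ge0 ?sqr_ge0 ?nsq_ge0.
Qed.


Lemma invmxM' n (A B : 'M[C]_n) : A \in unitmx -> B \in unitmx ->
  invmx (A *m B) = invmx B *m invmx A.
Proof.
move=> uA uB; have uAB : A *m B \in unitmx by rewrite unitmx_mul uA uB.
have h : (A *m B) *m (invmx B *m invmx A) = 1%:M.
  by rewrite -mulmxA (mulmxA B) mulmxV // mul1mx mulmxV.
by rewrite -[invmx (A *m B)]mulmx1 -h mulmxA mulVmx // mul1mx.
Qed.


Lemma sq_le (a b : R) : 0 <= a -> a <= b -> a ^+ 2 <= b ^+ 2.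
Proof. by move=> a0 ab; nra. Qed.


Lemma final_arith (a1 a2 W X0 U V' s s2 sk sk1 sl : R) :
  a1 <= sk1 ^+ 2 * U -> a2 <= sl ^+ 2 * V' -> sk ^+ 2 * W <= X0 ->
  U <= s2 ^+ 2 * W -> U + V' <= s ^+ 2 * W ->
  0 <= W -> 0 <= U -> 0 <= V' -> 0 <= s -> 0 <= s2 -> s2 <= s ->
  0 < sk -> 0 < sl -> sl <= sk1 ->
  a1 + a2 <= ((sl * s + (sk1 - sl) * s2) / sk) ^+ 2 * X0.
Proof.
move=> hU hV hW hu huv W0 U0 V0 s0 s20 s2s skp slp sl_k.
set P := sl * s + (sk1 - sl) * s2.
have T1a : 0 <= sl ^+ 2 * (s ^+ 2 * W - U - V').
  by apply: mulr_ge0; [exact: sqr_ge0 | lra].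
have T1b : 0 <= (sk1 ^+ 2 - sl ^+ 2) * (s2 ^+ 2 * W - U).
  apply: mulr_ge0; last by lra.
  by rewrite subr_ge0; apply: sq_le => //; exact: ltW.
have T2 : 0 <= sl * (sk1 - sl) * s2 * (s - s2) * W.
  by rewrite !mulr_ge0 // ?subr_ge0 // ltW.
have T3 : 0 <= (P / sk) ^+ 2 * (X0 - sk ^+ 2 * W).
  by rewrite mulr_ge0 ?sqr_ge0 // subr_ge0.
have E3 : (P / sk) ^+ 2 * (sk ^+ 2 * W) = P ^+ 2 * W.
  by rewrite mulrA; congr (_ * _); field; rewrite gt_eqF.
move: T3 E3; set Q := (P / sk) ^+ 2 => T3 E3.
rewrite /P in T3 E3 *.
lra.
Qed.

End H.

Theorem theorem5p1 (R : realType) (k m p : nat)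
  (B V : 'M[R[i]]_(k + m + p)) (sigma : nat -> R)
  (X : 'M[R[i]]_(k + m + p, k))
  (Xk : 'M[R[i]]_k) (Xlk : 'M[R[i]]_(m, k)) (Xp : 'M[R[i]]_(p, k)) :
  (0 < k)%N -> (0 < m)%N -> (0 < p)%N ->
  adjmx B = B ->
  (forall x : 'cV[R[i]]_(k + m + p), x != 0 ->
     0 < complex.Re ((adjmx x *m B *m x) 0 0) /\
     complex.Im ((adjmx x *m B *m x) 0 0) = 0) ->
  adjmx V *m V = 1%:M ->
  (forall i : 'I_(k + m + p), B *m col i V = ((sigma i)%:C)%C *: col i V) ->
  (forall i j : 'I_(k + m + p), (i <= j)%N -> sigma j <= sigma i) ->
  (forall i : 'I_(k + m + p), 0 < sigma i) ->
  adjmx X *m X = 1%:M ->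
  X = V *m col_mx (col_mx Xk Xlk) Xp ->
  Xk \in unitmx ->
  let Vk : 'M[R[i]]_(k + m + p, k) := lsubmx (lsubmx V) in
  tan_angle Vk X != 0 ->
  tan_angle Vk (B *m X) / tan_angle Vk X <=
    sigma (k + m)%N / sigma k.-1
    + (sigma k - sigma (k + m)%N) / sigma k.-1
      * (specnorm (Xlk *m invmx Xk) / specnorm (col_mx Xlk Xp *m invmx Xk)).

Proof.
move=> k0 m0 p0 HB Hpd HV Heig Hmono Hpos HX HXX HXk Vk Htan.
set n := (k + m + p)%N.
have mono : forall a b, (a <= b)%N -> (b < n)%N -> sigma b <= sigma a.
  move=> a b ab bn; exact: (Hmono (Ordinal (leq_ltn_trans ab bn)) (Ordinal bn) ab).
have pos : forall a, (a < n)%N -> 0 < sigma a.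
  by move=> a an; exact: (Hpos (Ordinal an)).
set s := specnorm (col_mx Xlk Xp *m invmx Xk).
set s2 := specnorm (Xlk *m invmx Xk).
have tX : tan_angle Vk X = s by rewrite HXX; exact: tan_formula.
pose D := diag_mx (\row_(i < n) ((sigma i)%:C)%C).
have BV : B *m V = V *m D.
  apply/matrixP => a i; have := congr1 (fun M : 'cV[R[i]]_(k + m + p) => M a 0) (Heig i).
  rewrite /D mul_mx_diag !mxE /= mulrC => <-.
  by apply: eq_bigr => j _; rewrite mxE.
pose D1 := diag_mx (\row_(i < k) ((sigma i)%:C)%C).
pose D2 := diag_mx (\row_(i < m) ((sigma (k + i)%N)%:C)%C).
pose D3 := diag_mx (\row_(i < p) ((sigma (k + m + i)%N)%:C)%C).
have DC : D *m col_mx (col_mx Xk Xlk) Xp =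
          col_mx (col_mx (D1 *m Xk) (D2 *m Xlk)) (D3 *m Xp).
  rewrite /D /D1 /D2 /D3 !mul_diag_mx; apply/matrixP => i j; rewrite !mxE.
  case: splitP => i1 Hi1; rewrite !mxE; last by rewrite Hi1.
  by case: splitP => i2 Hi2; rewrite !mxE Hi1 Hi2.
have D1u : D1 \in unitmx.
  rewrite unitmxE det_diag unitfE; apply/prodf_neq0 => i _; rewrite mxE.
  apply/eqP => -[] /eqP; rewrite gt_eqF // pos //.
  by apply: (leq_trans (ltn_ord i)); rewrite /n -addnA leq_addr.
have BX : B *m X = V *m col_mx (col_mx (D1 *m Xk) (D2 *m Xlk)) (D3 *m Xp).
  by rewrite HXX mulmxA BV -mulmxA DC.
have Y1u : D1 *m Xk \in unitmx by rewrite unitmx_mul D1u HXk.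
have tBX : tan_angle Vk (B *m X) =
    specnorm (col_mx (D2 *m Xlk) (D3 *m Xp) *m invmx (D1 *m Xk)).
  by rewrite BX; exact: tan_formula.
have kn : (k.-1 < n)%N.
  by rewrite /n (leq_trans _ (leq_addr p _)) // (leq_trans _ (leq_addr m _)) // prednK // ltnW.
have kmn : (k + m < n)%N by rewrite /n -addn1 leq_add2l.
have skp : 0 < sigma k.-1 by apply: pos.
have slp : 0 < sigma (k + m)%N by apply: pos.
have sl_k : sigma (k + m)%N <= sigma k by apply: mono => //; rewrite leq_addr.
have s0 : 0 <= s := specnorm_ge0 _.
have s20 : 0 <= s2 := specnorm_ge0 _.
pose A2 := Xlk *m invmx Xk.
pose A3 := Xp *m invmx Xk.
have AE : forall z : 'cV[R[i]]_k, col_mx Xlk Xp *m invmx Xk *m z = col_mx (A2 *m z) (A3 *m z).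
  by move=> z; rewrite !mul_col_mx.
have s2s : s2 <= s.
  apply: specnorm_le_sq => // z.
  apply: le_trans (specnorm_bound_sq _ z); rewrite AE nsq_col_mx lerDl nsq_ge0 //.
set K := (sigma (k + m)%N * s + (sigma k - sigma (k + m)%N) * s2) / sigma k.-1.
have K0 : 0 <= K.
  apply: divr_ge0; last exact: ltW skp.
  by apply: addr_ge0; apply: mulr_ge0 => //; [exact: ltW slp | rewrite subr_ge0].
have HK : specnorm (col_mx (D2 *m Xlk) (D3 *m Xp) *m invmx (D1 *m Xk)) <= K.
  apply: specnorm_le_sq => // x.
  pose w := invmx D1 *m x.
  have xw : x = D1 *m w by rewrite /w mulKVmx.
  have Mx : col_mx (D2 *m Xlk) (D3 *m Xp) *m invmx (D1 *m Xk) *m x =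
            col_mx (D2 *m (A2 *m w)) (D3 *m (A3 *m w)).
    by rewrite invmxM' // !mul_col_mx !mulmxA.
  rewrite Mx nsq_col_mx.
  have hU : nsq (D2 *m (A2 *m w)) <= sigma k ^+ 2 * nsq (A2 *m w).
    apply: (nsq_scale_le (d := fun i : 'I_m => sigma (k + i)%N)).
      by move=> i; rewrite mul_diag_mx !mxE.
    move=> i; apply: sq_le; first by apply/ltW/pos; rewrite /n -addnA ltn_add2l ltn_addr.
    by apply: mono; rewrite ?leq_addr // /n -addnA ltn_add2l ltn_addr.
  have hV : nsq (D3 *m (A3 *m w)) <= sigma (k + m)%N ^+ 2 * nsq (A3 *m w).
    apply: (nsq_scale_le (d := fun i : 'I_p => sigma (k + m + i)%N)).
      by move=> i; rewrite mul_diag_mx !mxE.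
    move=> i; apply: sq_le; first by apply/ltW/pos; rewrite /n ltn_add2l.
    by apply: mono; rewrite ?leq_addr // /n ltn_add2l.
  have hW : sigma k.-1 ^+ 2 * nsq w <= nsq x.
    rewrite {1}xw; apply: (nsq_scale_ge (d := fun i : 'I_k => sigma i)).
      by move=> i; rewrite mul_diag_mx !mxE.
    move=> i; apply: sq_le; first exact: ltW.
    by apply: mono => //; rewrite -ltnS prednK.
  have hu : nsq (A2 *m w) <= s2 ^+ 2 * nsq w := specnorm_bound_sq _ _.
  have huv : nsq (A2 *m w) + nsq (A3 *m w) <= s ^+ 2 * nsq w.
    by rewrite -nsq_col_mx -AE specnorm_bound_sq.
  rewrite /K; apply: (final_arith hU hV hW hu huv) => //; try exact: nsq_ge0.
rewrite tBX tX.
have sn0 : s != 0 by rewrite -tX.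
have -> : sigma (k + m)%N / sigma k.-1 +
    (sigma k - sigma (k + m)%N) / sigma k.-1 * (s2 / s) = K / s.
  by rewrite /K; field; rewrite sn0 gt_eqF.
by apply: ler_wpM2r => //; rewrite invr_ge0.
Qed.
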